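(* Let $A$ and $B$ be self-adjoint operators on the same complex Hilbert space, with $B$ bounded and non-negative. If $B \neq 0$, then $\bigcup_{t\in\mathbb{R}} \sigma(A+tB)$ is a dense subset of $\mathbb{R}$.
   Context: $\sigma(T)$ denotes the spectrum of an operator $T$. $A$ may be unbounded; $A+tB$ is defined on the domain of $A$. *)

(* Defs.v *)
From HB Require Import structures.
From mathcomp Require Import all_boot all_order all_algebra.
From mathcomp Require Import complex reals.
Set Implicit Arguments. Unset Strict Implicit. Unset Printing Implicit Defensive.
Import Order.TTheory GRing.Theory Num.Theory.
Local Open Scope ring_scope.
Local Open Scope complex_scope.

Section Hilbert.
Variables (R : realType) (H : lmodType R[i]) (ip : H -> H -> R[i]).

Definition hnorm (x : H) : R := Num.sqrt (complex.Re (ip x x)).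

Definition is_hilbert : Prop :=
  [/\ (forall (a : R[i]) x y z, ip (a *: x + y) z = a * ip x z + ip y z),
      (forall x y, ip y x = (ip x y)^*),
      (forall x, 0 <= ip x x),
      (forall x, ip x x = 0 -> x = 0) &
      (forall u : nat -> H,
         (forall e : R, 0 < e -> exists N, forall m n, (N <= m)%N -> (N <= n)%N ->
             hnorm (u m - u n) < e) ->
         exists l : H, forall e : R, 0 < e -> exists N, forall n, (N <= n)%N ->
             hnorm (u n - l) < e)].

(* A (possibly unbounded) operator is a map T : H -> H together with a domain
   D : H -> Prop; values of T outside D are irrelevant. *)
Definition linear_on (D : H -> Prop) (T : H -> H) : Prop :=
  [/\ D 0,
      (forall (a : R[i]) x y, D x -> D y -> D (a *: x + y)) &
      (forall (a : R[i]) x y, D x -> D y -> T (a *: x + y) = a *: T x + T y)].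

Definition dense (D : H -> Prop) : Prop :=
  forall x (e : R), 0 < e -> exists y, D y /\ hnorm (x - y) < e.

Definition adjoint_dom (D : H -> Prop) (T : H -> H) (y : H) : Prop :=
  exists z : H, forall x, D x -> ip (T x) y = ip x z.

(* T with domain D is self-adjoint: densely defined, T^* = T with D(T^* ) = D.
   (For y in D, T^* y = T y is the symmetry condition, the adjoint being
   well defined since D is dense.) *)
Definition self_adjoint (D : H -> Prop) (T : H -> H) : Prop :=
  [/\ linear_on D T, dense D,
      (forall x y, D x -> D y -> ip (T x) y = ip x (T y)) &
      (forall y, adjoint_dom D T y -> D y)].

Definition bounded_op (T : H -> H) : Prop :=
  linear_on (fun _ => True) T /\
  exists C : R, forall x, hnorm (T x) <= C * hnorm x.

Definition resolvent (D : H -> Prop) (T : H -> H) (lam : R[i]) : Prop :=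
  exists S : H -> H, [/\ bounded_op S,
    (forall y, D (S y) /\ T (S y) - lam *: S y = y) &
    (forall x, D x -> S (T x - lam *: x) = x)].

Definition spectrum (D : H -> Prop) (T : H -> H) (lam : R[i]) : Prop :=
  ~ resolvent D T lam.

End Hilbert.

(* Main.v *)
Require Import Defs.
From HB Require Import structures.
From mathcomp Require Import all_boot all_order all_algebra.
From mathcomp Require Import complex reals classical_sets.
From mathcomp Require Import ring lra.
From Stdlib Require Import IndefiniteDescription.
Set Implicit Arguments. Unset Strict Implicit. Unset Printing Implicit Defensive.
Import Order.TTheory GRing.Theory Num.Theory.
Local Open Scope ring_scope.
Local Open Scope complex_scope.

Section Base.
Variables (R : realType) (H : lmodType R[i]) (ip : H -> H -> R[i]).
Hypothesis ipl : forall (a : R[i]) x y z, ip (a *: x + y) z = a * ip x z + ip y z.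
Hypothesis ipC : forall x y, ip y x = conjc (ip x y).
Hypothesis ipge0 : forall x, 0 <= ip x x.
Hypothesis ipdef : forall x, ip x x = 0 -> x = 0.

Local Notation q x := (complex.Re (ip x x)).
Local Notation nm := (hnorm ip).

Lemma ipDl x y z : ip (x + y) z = ip x z + ip y z.
Proof. by have := ipl 1 x y z; rewrite scale1r mul1r. Qed.
Lemma ip0l z : ip 0 z = 0.
Proof. have := ipDl 0 0 z; rewrite addr0 => /eqP; rewrite -subr_eq0 => /eqP h.
by move: h; rewrite opprD addrA subrr sub0r => /eqP; rewrite oppr_eq0 => /eqP. Qed.
Lemma ipZl a x z : ip (a *: x) z = a * ip x z.
Proof. by have := ipl a x 0 z; rewrite addr0 ip0l addr0. Qed.
Lemma ipNl x z : ip (- x) z = - ip x z.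
Proof. by rewrite -scaleN1r ipZl mulN1r. Qed.
Lemma ipBl x y z : ip (x - y) z = ip x z - ip y z.
Proof. by rewrite ipDl ipNl. Qed.
Lemma conjD (a b : R[i]) : conjc (a + b) = conjc a + conjc b.
Proof. by case: a => ? ?; case: b => ? ? /=; simpc. Qed.
Lemma conjM (a b : R[i]) : conjc (a * b) = conjc a * conjc b.
Proof. by case: a => ? ?; case: b => ? ? /=; simpc; apply/eqP; rewrite eq_complex /=; apply/andP; split; apply/eqP; ring. Qed.
Lemma conjN (a : R[i]) : conjc (- a) = - conjc a.
Proof. by case: a => ? ? /=; simpc. Qed.
Lemma ipDr x y z : ip z (x + y) = ip z x + ip z y.
Proof. by rewrite ipC ipDl conjD -!ipC. Qed.
Lemma ipZr a x z : ip z (a *: x) = conjc a * ip z x.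
Proof. by rewrite ipC ipZl conjM -!ipC. Qed.
Lemma ip0r z : ip z 0 = 0.
Proof. by rewrite ipC ip0l conjc0. Qed.
Lemma ipNr x z : ip z (- x) = - ip z x.
Proof. by rewrite ipC ipNl conjN -!ipC. Qed.
Lemma ipBr x y z : ip z (x - y) = ip z x - ip z y.
Proof. by rewrite ipDr ipNr. Qed.

Lemma Im_ipxx x : complex.Im (ip x x) = 0.
Proof. exact: ger0_Im. Qed.
Lemma q_ge0 x : 0 <= q x.
Proof. by have := ipge0 x; rewrite lecE /= => /andP[]. Qed.
Lemma ipxx x : ip x x = (q x)%:C.
Proof. by rewrite [LHS]complexE Im_ipxx mulr0 addr0. Qed.
Lemma q0 x : q x = 0 -> x = 0.
Proof. by move=> h; apply: ipdef; rewrite ipxx h. Qed.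
Lemma q_zero : q 0 = 0.
Proof. by rewrite ip0l. Qed.

Lemma ReC (a b : R[i]) : complex.Re (a + b) = complex.Re a + complex.Re b.
Proof. by case: a; case: b. Qed.
Lemma ImC (a b : R[i]) : complex.Im (a + b) = complex.Im a + complex.Im b.
Proof. by case: a; case: b. Qed.
Lemma ReN (a : R[i]) : complex.Re (- a) = - complex.Re a.
Proof. by case: a. Qed.
Lemma ImN (a : R[i]) : complex.Im (- a) = - complex.Im a.
Proof. by case: a. Qed.
Lemma ReM (a b : R[i]) : complex.Re (a * b) = complex.Re a * complex.Re b - complex.Im a * complex.Im b.
Proof. by case: a => ? ?; case: b. Qed.
Lemma ImM (a b : R[i]) : complex.Im (a * b) = complex.Re a * complex.Im b + complex.Im a * complex.Re b.
Proof. by case: a => ? ?; case: b. Qed.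
Lemma ReJ (a : R[i]) : complex.Re (conjc a) = complex.Re a.
Proof. by case: a. Qed.
Lemma ImJ (a : R[i]) : complex.Im (conjc a) = - complex.Im a.
Proof. by case: a. Qed.
Lemma ReRC (r : R) : complex.Re (r%:C) = r. Proof. by []. Qed.
Lemma ImRC (r : R) : complex.Im (r%:C) = 0. Proof. by []. Qed.
Lemma Re_i : complex.Re 'i = 0 :> R. Proof. by []. Qed.
Lemma Im_i : complex.Im 'i = 1 :> R. Proof. by []. Qed.
Lemma Re0 : complex.Re 0 = 0 :> R. Proof. by []. Qed.
Lemma Im0 : complex.Im 0 = 0 :> R. Proof. by []. Qed.
Lemma Re1 : complex.Re 1 = 1 :> R. Proof. by []. Qed.
Lemma Im1 : complex.Im 1 = 0 :> R. Proof. by []. Qed.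
Lemma cplx_eq (a b : R[i]) : complex.Re a = complex.Re b -> complex.Im a = complex.Im b -> a = b.
Proof. by case: a => ? ?; case: b => ? ? /= -> ->. Qed.

Definition cE := (ReC, ImC, ReN, ImN, ReM, ImM, ReJ, ImJ, Re_i, Im_i, Re1, Im1, Re0, Im0, ReRC, ImRC).

Lemma Re_ipC x y : complex.Re (ip y x) = complex.Re (ip x y).
Proof. by rewrite ipC ReJ. Qed.
Lemma Im_ipC x y : complex.Im (ip y x) = - complex.Im (ip x y).
Proof. by rewrite ipC ImJ. Qed.

Lemma qD x y : q (x + y) = q x + q y + 2 * complex.Re (ip x y).
Proof. rewrite ipDl !ipDr !ReC (Re_ipC x y). ring. Qed.
Lemma qB x y : q (x - y) = q x + q y - 2 * complex.Re (ip x y).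
Proof. rewrite ipBl !ipBr !(ReC, ReN) (Re_ipC x y). ring. Qed.
Lemma qN x : q (- x) = q x.
Proof. by rewrite ipNl ipNr opprK. Qed.
Lemma qZ a x : q (a *: x) = (complex.Re a ^+ 2 + complex.Im a ^+ 2) * q x.
Proof. rewrite ipZl ipZr ipxx !cE. ring. Qed.
Lemma qZr (r : R) x : q (r%:C *: x) = r ^+ 2 * q x.
Proof. rewrite qZ !cE. ring. Qed.

Lemma Re_ipZr (r : R) x y : complex.Re (ip x (r%:C *: y)) = r * complex.Re (ip x y).
Proof. rewrite ipZr !cE. ring. Qed.
Lemma Re_ipZl (r : R) x y : complex.Re (ip (r%:C *: x) y) = r * complex.Re (ip x y).
Proof. rewrite ipZl !cE. ring. Qed.

Lemma CS_re x y : complex.Re (ip x y) ^+ 2 <= q x * q y.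
Proof.
have [y0|ny0] := eqVneq (q y) 0.
  by rewrite (q0 y0) ip0r Re0 expr0n /= q_zero mulr0.
have qy : 0 < q y by rewrite lt0r ny0 q_ge0.
set s := - complex.Re (ip x y) / q y.
have := q_ge0 (x + s%:C *: y).
rewrite qD qZr Re_ipZr /s.
move=> h.
have : 0 <= q x * q y - complex.Re (ip x y) ^+ 2.
  have e : q x * q y - complex.Re (ip x y) ^+ 2 =
    q y * (q x + (- complex.Re (ip x y) / q y) ^+ 2 * q y +
       2 * (- complex.Re (ip x y) / q y * complex.Re (ip x y))).
    field. by rewrite ny0.
  by rewrite e mulr_ge0 // ltW.
by rewrite subr_ge0.
Qed.

Lemma Im_as_Re x y : complex.Im (ip x y) = complex.Re (ip x ('i *: y)).
Proof. rewrite ipZr !cE. ring. Qed.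
Lemma q_iZ y : q ('i *: y) = q y.
Proof. rewrite qZ !cE. ring. Qed.

Lemma CS_im x y : complex.Im (ip x y) ^+ 2 <= q x * q y.
Proof. by rewrite Im_as_Re -(q_iZ y) CS_re. Qed.

Lemma nmE x : nm x = Num.sqrt (q x). Proof. by []. Qed.
Lemma nm_ge0 x : 0 <= nm x. Proof. exact: sqrtr_ge0. Qed.
Lemma nm_sq x : nm x ^+ 2 = q x. Proof. by rewrite sqr_sqrtr // q_ge0. Qed.
Lemma nm0 : nm 0 = 0. Proof. by rewrite nmE q_zero sqrtr0. Qed.
Lemma nm_eq0 x : nm x = 0 -> x = 0.
Proof. by move=> h; apply: q0; rewrite -nm_sq h expr0n. Qed.

Lemma le_sq_nm (a b : R) : 0 <= a -> 0 <= b -> a ^+ 2 <= b ^+ 2 -> a <= b.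
Proof. move=> ha hb h; nra. Qed.

Lemma abs_le_of_sq (a b : R) : 0 <= b -> a ^+ 2 <= b ^+ 2 -> `|a| <= b.
Proof. by move=> hb h; apply: le_sq_nm => //; rewrite real_normK ?num_real. Qed.

Lemma CS_re_nm x y : `|complex.Re (ip x y)| <= nm x * nm y.
Proof.
apply: abs_le_of_sq; first by rewrite mulr_ge0 ?nm_ge0.
by rewrite exprMn !nm_sq CS_re.
Qed.
Lemma CS_im_nm x y : `|complex.Im (ip x y)| <= nm x * nm y.
Proof.
apply: abs_le_of_sq; first by rewrite mulr_ge0 ?nm_ge0.
by rewrite exprMn !nm_sq CS_im.
Qed.
Lemma Re_le_nm x y : complex.Re (ip x y) <= nm x * nm y.
Proof. exact: le_trans (ler_norm _) (CS_re_nm x y). Qed.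

Lemma nm_triangle x y : nm (x + y) <= nm x + nm y.
Proof.
apply: le_sq_nm; rewrite ?nm_ge0 ?addr_ge0 ?nm_ge0 //.
rewrite nm_sq qD sqrrD !nm_sq.
have := Re_le_nm x y. lra.
Qed.
Lemma nmN x : nm (- x) = nm x. Proof. by rewrite nmE qN. Qed.
Lemma nmZr (r : R) x : nm (r%:C *: x) = `|r| * nm x.
Proof. by rewrite nmE qZr sqrtrM ?sqrtr_sqr // sqr_ge0. Qed.
Lemma nmB_sym x y : nm (x - y) = nm (y - x).
Proof. by rewrite -nmN opprB. Qed.
Lemma nm_triangleB x y z : nm (x - z) <= nm (x - y) + nm (y - z).
Proof. by have := nm_triangle (x - y) (y - z); rewrite addrA subrK. Qed.


Lemma approx0 (r K : R) : (forall e, 0 < e -> `|r| <= K * e) -> r = 0.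
Proof.
move=> h; apply/eqP; apply/negPn/negP => r0.
have ra : 0 < `|r| by rewrite normr_gt0.
have [K0|K0] := lerP K 0.
  by have := h 1 ltr01; rewrite mulr1 => h1; have := le_trans h1 K0; rewrite leNgt ra.
have := h (`|r| / (2 * K)) (divr_gt0 ra (mulr_gt0 (ltr0Sn _ 1) K0)).
have -> : K * (`|r| / (2 * K)) = `|r| / 2 by field; rewrite gt_eqF.
lra.
Qed.

Lemma le_of_eps (a b : R) : (forall e, 0 < e -> a <= b + e) -> a <= b.
Proof.
move=> h; rewrite leNgt; apply/negP => ab.
have := h ((a - b) / 2); rewrite divr_gt0 ?subr_gt0 // => /(_ isT). lra.
Qed.

Lemma quad0 (a r : R) : 0 <= a -> (forall s : R, 0 <= s ^+ 2 * a - 2 * s * r) -> r = 0.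
Proof.
move=> a0 h; have := h (r / (a + 1)).
have a1 : 0 < a + 1 by lra.
have -> : (r / (a + 1)) ^+ 2 * a - 2 * (r / (a + 1)) * r
   = - (r ^+ 2 / (a + 1)) * ((a + 2) / (a + 1)) by field; rewrite gt_eqF.
have h2 : 0 < (a + 2) / (a + 1) by rewrite divr_gt0 //; lra.
move=> h3; rewrite mulNr oppr_ge0 in h3.
have hX0 : 0 <= r ^+ 2 / (a + 1) by rewrite divr_ge0 ?sqr_ge0 // ltW.
have hX : r ^+ 2 / (a + 1) <= 0 by nra.
have e1 : r ^+ 2 = r ^+ 2 / (a + 1) * (a + 1) by field; rewrite gt_eqF.
have : r ^+ 2 <= 0 by rewrite e1; nra.
by rewrite real_exprn_even_le0 //= ?num_real // => /eqP.
Qed.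

Lemma fchoice (A B : Type) (P : A -> B -> Prop) :
  (forall a, exists b, P a b) -> exists f : A -> B, forall a, P a (f a).
Proof.
move=> h; exists (fun a => proj1_sig (IndefiniteDescription.constructive_indefinite_description _ (h a))).
by move=> a; case: (IndefiniteDescription.constructive_indefinite_description _ (h a)).
Qed.

Lemma eps_nat (e : R) : 0 < e -> exists N : nat, forall n, (N <= n)%N -> n.+1%:R^-1 < e.
Proof.
move=> e0; have [k hk] := ltr_add_invr e0; exists k => n kn.
rewrite add0r in hk; apply: le_lt_trans hk.
by rewrite lef_pV2 ?posrE ?ltr0Sn // ler_nat.
Qed.


Lemma nmZ (a : R[i]) x : nm (a *: x) = Num.sqrt (complex.Re a ^+ 2 + complex.Im a ^+ 2) * nm x.
Proof. by rewrite nmE qZ sqrtrM // addr_ge0 // sqr_ge0. Qed.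

Lemma nm_lt_q x e : 0 < e -> (nm x < e) = (q x < e ^+ 2).
Proof.
move=> e0; rewrite -nm_sq; have := nm_ge0 x; move: (nm x) => a a0.
by apply/idP/idP => h; nra.
Qed.

Section Lin.
Variables (D : H -> Prop) (T : H -> H).
Hypothesis hl : linear_on D T.

Lemma linD0 : D 0. Proof. by case: hl. Qed.
Lemma linT0 : T 0 = 0.
Proof.
case: hl => d0 _ hT; have := hT 1 0 0 d0 d0; rewrite scaler0 addr0 scale1r => /eqP.
by rewrite -subr_eq0 opprD addrA subrr sub0r oppr_eq0 => /eqP.
Qed.
Lemma linDD x y : D x -> D y -> D (x + y).
Proof. by case: hl => _ hD _ dx dy; have := hD 1 x y dx dy; rewrite scale1r. Qed.
Lemma linTD x y : D x -> D y -> T (x + y) = T x + T y.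
Proof. by case: hl => _ _ hT dx dy; have := hT 1 x y dx dy; rewrite !scale1r. Qed.
Lemma linDZ a x : D x -> D (a *: x).
Proof. by case: hl => d0 hD _ dx; have := hD a x 0 dx d0; rewrite addr0. Qed.
Lemma linTZ a x : D x -> T (a *: x) = a *: T x.
Proof. by case: hl => d0 _ hT dx; have := hT a x 0 dx d0; rewrite addr0 linT0 addr0. Qed.
Lemma linDN x : D x -> D (- x).
Proof. by move=> dx; rewrite -scaleN1r; apply: linDZ. Qed.
Lemma linTN x : D x -> T (- x) = - T x.
Proof. by move=> dx; rewrite -scaleN1r linTZ // scaleN1r. Qed.
Lemma linDB x y : D x -> D y -> D (x - y).
Proof. by move=> dx dy; apply: linDD => //; apply: linDN. Qed.
Lemma linTB x y : D x -> D y -> T (x - y) = T x - T y.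
Proof. by move=> dx dy; rewrite linTD ?linTN //; apply: linDN. Qed.
End Lin.

Definition cauchy (u : nat -> H) := forall e : R, 0 < e -> exists N, forall m n, (N <= m)%N -> (N <= n)%N ->
             nm (u m - u n) < e.
Definition conv (u : nat -> H) l := forall e : R, 0 < e -> exists N, forall n, (N <= n)%N ->
             nm (u n - l) < e.

Lemma Re_ip_conv (u : nat -> H) l a : conv u l ->
  forall e : R, 0 < e -> exists N, forall n, (N <= n)%N ->
    `|complex.Re (ip a (u n)) - complex.Re (ip a l)| <= nm a * e.
Proof.
move=> hc e e0; have [N hN] := hc e e0; exists N => n /hN h.
rewrite -ReN -ReC -ipBr; apply: le_trans (CS_re_nm _ _) _.
by rewrite ler_wpM2l ?nm_ge0 // ltW.
Qed.

Section SA.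
Variables (D : H -> Prop) (T : H -> H).
Hypothesis hsa : self_adjoint ip D T.

Let hl : linear_on D T. Proof. by case: hsa. Qed.
Let hdense : dense ip D. Proof. by case: hsa. Qed.
Let hsym : forall x y, D x -> D y -> ip (T x) y = ip x (T y). Proof. by case: hsa. Qed.
Let hadj : forall y, adjoint_dom ip D T y -> D y. Proof. by case: hsa. Qed.

Lemma sa_real x : D x -> complex.Im (ip (T x) x) = 0.
Proof.
move=> dx; have h := hsym dx dx; rewrite [in RHS]ipC in h.
have := congr1 (@complex.Im R) h; rewrite ImJ => e; lra.
Qed.

Lemma orth_dense u : (forall d, D d -> ip d u = 0) -> u = 0.
Proof.
move=> h; apply: nm_eq0; apply: (@approx0 _ 1) => e e0.
have [d [dd hd]] := hdense u e0.
have qu : q u = complex.Re (ip (u - d) u) by rewrite ipBl (h d dd) subr0.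
rewrite ger0_norm ?nm_ge0 //.
have : nm u ^+ 2 <= nm u * e.
  rewrite nm_sq qu; apply: le_trans (Re_le_nm _ _) _.
  by rewrite mulrC ler_wpM2l ?nm_ge0 // ltW.
have := nm_ge0 u; nra.
Qed.

Lemma sa_closed (xs : nat -> H) x w : (forall n, D (xs n)) -> conv xs x ->
  conv (fun n => T (xs n)) w -> D x /\ T x = w.
Proof.
move=> dxs cx cw.
have hre : forall d, D d -> complex.Re (ip (T d) x) = complex.Re (ip d w).
  move=> d dd; apply/eqP; rewrite -subr_eq0; apply/eqP.
  apply: (@approx0 _ (nm (T d) + nm d)) => e e0.
  have [N1 h1] := Re_ip_conv (T d) cx e0.
  have [N2 h2] := Re_ip_conv d cw e0.
  have h1' := h1 (maxn N1 N2) (leq_maxl _ _).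
  have h2' := h2 (maxn N1 N2) (leq_maxr _ _).
  rewrite hsym // in h1'.
  set a := complex.Re (ip (T d) x) in h1' *; set b := complex.Re (ip d w) in h2' *.
  set c := complex.Re (ip d (T (xs (maxn N1 N2)))) in h1' h2'.
  have : `|a - b| <= `|c - a| + `|c - b|.
    by rewrite (distrC c a); have := ler_normD (a - c) (c - b); rewrite addrA subrK.
  move=> h3; apply: le_trans h3 _; rewrite mulrDl; exact: lerD.
have hip : forall d, D d -> ip (T d) x = ip d w.
  move=> d dd; apply: cplx_eq; first exact: hre.
  have dd' : D ('i *: d) by apply: (linDZ hl).
  have := hre _ dd'; rewrite (linTZ hl) // !ipZl !cE.
  move=> e; lra.
have dx : D x by apply: hadj; exists w.
split=> //; apply/eqP; rewrite -subr_eq0; apply/eqP; apply: orth_dense => d dd.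
by rewrite ipBr -hsym // hip // subrr.
Qed.
End SA.


Lemma parallelogram a b : q (a + b) + q (a - b) = 2 * q a + 2 * q b.
Proof. rewrite qD qB. ring. Qed.

Lemma zm1 (V : zmodType) (a b c : V) : a - b - (a - c) = - (b - c).
Proof. by rewrite opprB addrC addrA subrK opprB. Qed.
Lemma zm2 (V : zmodType) (a b c d : V) : a - b - (c - d) = (a - c) - (b - d).
Proof. by rewrite opprD addrACA -opprD. Qed.
Lemma zm3 (V : zmodType) (a b c : V) : a + b - (c + a) = b - c.
Proof. by rewrite [c + a]addrC opprD addrACA subrr add0r. Qed.

Lemma zm4 (V : zmodType) (a b c d : V) : a - (c + d) = (a - b - c) + (b - d).
Proof. by rewrite addrACA subrK -opprD. Qed.

Section Resolv.
Variables (D : H -> Prop) (T : H -> H) (z : R[i]).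
Hypothesis hsa : self_adjoint ip D T.
Hypothesis hcomp : forall u, cauchy u -> exists l, conv u l.
Hypothesis hz : complex.Im z != 0.

Let hl : linear_on D T. Proof. by case: hsa. Qed.
Let hsym : forall x y, D x -> D y -> ip (T x) y = ip x (T y). Proof. by case: hsa. Qed.
Let hadj : forall y, adjoint_dom ip D T y -> D y. Proof. by case: hsa. Qed.

Let L x := T x - z *: x.

Lemma LB x y : D x -> D y -> L (x - y) = L x - L y.
Proof.
move=> dx dy; rewrite /L (linTB hl) // scalerBr.
by rewrite opprD addrACA -opprD.
Qed.
Lemma LD x y : D x -> D y -> L (x + y) = L x + L y.
Proof.
move=> dx dy; rewrite /L (linTD hl) // scalerDr.
by rewrite opprD addrACA.
Qed.
Lemma LZ a x : D x -> L (a *: x) = a *: L x.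
Proof. by move=> dx; rewrite /L (linTZ hl) // scalerBr !scalerA mulrC. Qed.

Lemma lowb x : D x -> `|complex.Im z| * nm x <= nm (L x).
Proof.
move=> dx.
have hIm : complex.Im (ip (L x) x) = - (complex.Im z * q x).
  by rewrite /L ipBl ipZl ipxx !cE (sa_real hsa dx); ring.
have h1 : `|complex.Im z| * (nm x * nm x) <= nm (L x) * nm x.
  apply: le_trans (CS_im_nm _ _).
  by rewrite hIm normrN normrM (ger0_norm (q_ge0 x)) -nm_sq expr2.
have a0 := nm_ge0 x; have b0 := nm_ge0 (L x); have c0 := normr_ge0 (complex.Im z).
have [->|ax] := eqVneq (nm x) 0; first by rewrite mulr0.
have ap : 0 < nm x by rewrite lt0r ax.
nra.
Qed.

Lemma L_inj x y : D x -> D y -> L x = L y -> x = y.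
Proof.
move=> dx dy e; have := lowb (linDB hl dx dy); rewrite LB // e subrr nm0.
move=> h; apply/eqP; rewrite -subr_eq0; apply/eqP; apply: nm_eq0.
have a0 := nm_ge0 (x - y); have c0 : 0 < `|complex.Im z| by rewrite normr_gt0.
nra.
Qed.


Lemma nm_ge_q x (d : R) : 0 <= d -> d <= nm x -> d ^+ 2 <= q x.
Proof. by move=> d0 h; rewrite -nm_sq; have := nm_ge0 x; nra. Qed.

Lemma surj y : exists x, D x /\ L x = y.
Proof.
pose E := fun r : R => exists x, D x /\ r = nm (y - L x).
have d0D := linD0 hl.
have lb0 : lbound E 0 by move=> r [x0 [_ ->]]; exact: nm_ge0.
have hinf : has_inf E by split; [exists (nm (y - L 0)); exists 0 | exists 0].
set d := inf E.
have dlb : forall x, D x -> d <= nm (y - L x).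
  by move=> x dx; apply: (ge_inf (proj2 hinf)); exists x.
have d0 : 0 <= d by apply: lb_le_inf => //; case: hinf.
have hseq : forall n : nat, exists x, D x /\ nm (y - L x) < d + n.+1%:R^-1.
  move=> n; have hp : 0 < n.+1%:R^-1 :> R by rewrite invr_gt0 ltr0Sn.
  have [r [x [dx ->]] hr] := inf_adherent hp hinf.
  by exists x.
have [xs hxs] := fchoice hseq.
have dxs : forall n, D (xs n) by move=> n; case: (hxs n).
pose ms n := L (xs n).
pose ep (n : nat) : R := n.+1%:R^-1.
have ep0 : forall n, 0 <= ep n by move=> n; rewrite invr_ge0 ler0n.
have key : forall n k, q (ms n - ms k) <= 2 * (d + ep n) ^+ 2 + 2 * (d + ep k) ^+ 2 - 4 * d ^+ 2.
  move=> n k.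
  pose mid := (1 + 1 : R[i])^-1 *: (xs n + xs k).
  have dmid : D mid by apply: (linDZ hl); apply: (linDD hl).
  have hpar := parallelogram (y - ms n) (y - ms k).
  have e1 : y - ms n + (y - ms k) = (1 + 1 : R[i]) *: (y - L mid).
    have eL : L mid = (1 + 1 : R[i])^-1 *: (ms n + ms k).
      by rewrite /mid LZ ?LD //; apply: (linDD hl).
    rewrite eL scalerBr scalerA mulfV; last first.
      by apply/eqP => /(congr1 (@complex.Re R)); rewrite ReC Re1 Re0 => e; lra.
    by rewrite scale1r scalerDl !scale1r [in RHS]opprD [LHS]addrACA.
  have e2 : y - ms n - (y - ms k) = - (ms n - ms k) by apply: zm1.
  rewrite e1 e2 qN qZ ReC ImC Re1 Im1 in hpar.
  have h1 := nm_ge_q d0 (dlb _ dmid).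
  have h2 : nm (y - ms n) <= d + ep n by apply: ltW; case: (hxs n).
  have h3 : nm (y - ms k) <= d + ep k by apply: ltW; case: (hxs k).
  have h2' : q (y - ms n) <= (d + ep n) ^+ 2 by rewrite -nm_sq; have := nm_ge0 (y - ms n); nra.
  have h3' : q (y - ms k) <= (d + ep k) ^+ 2 by rewrite -nm_sq; have := nm_ge0 (y - ms k); nra.
  lra.
have cq : forall e : R, 0 < e -> exists N, forall n k, (N <= n)%N -> (N <= k)%N -> q (ms n - ms k) < e.
  move=> e e0.
  pose eta := Num.min 1 (e / (8 * d + 5)).
  have eta0 : 0 < eta by rewrite lt_min ltr01 divr_gt0 //; lra.
  have eta1 : eta <= 1 by rewrite ge_min lexx.
  have eta2 : eta * (8 * d + 5) <= e.
    have : eta <= e / (8 * d + 5) by rewrite ge_min lexx orbT.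
    by rewrite ler_pdivlMr //; lra.
  have [N hN] := eps_nat eta0.
  exists N => n k hn hk; apply: le_lt_trans (key n k) _.
  have := hN n hn; have := hN k hk; rewrite -/(ep n) -/(ep k) => hk' hn'.
  have := ep0 n; have := ep0 k => p1 p2.
  nra.
have cms : cauchy ms.
  move=> e e0; have [N hN] := cq (e ^+ 2) (exprn_gt0 2 e0).
  by exists N => n k hn hk; rewrite nm_lt_q //; apply: hN.
have iz : 0 < `|complex.Im z| by rewrite normr_gt0.
have cxs : cauchy xs.
  move=> e e0; have [N hN] := cms (e * `|complex.Im z|) (mulr_gt0 e0 iz).
  exists N => n k hn hk; have := hN n k hn hk.
  have := lowb (linDB hl (dxs n) (dxs k)); rewrite LB // -/(ms n) -/(ms k).
  move=> h1 h2; have := le_lt_trans h1 h2; rewrite mulrC ltr_pM2r //.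
have [x cx] := hcomp cxs.
have [m cm] := hcomp cms.
pose cz := Num.sqrt (complex.Re z ^+ 2 + complex.Im z ^+ 2).
have cz0 : 0 <= cz by apply: sqrtr_ge0.
have cT : conv (fun n => T (xs n)) (m + z *: x).
  move=> e e0.
  have [N1 h1] := cm (e / 2) (divr_gt0 e0 (ltr0Sn _ 1)).
  have [N2 h2] := cx (e / 2 / (cz + 1)) (divr_gt0 (divr_gt0 e0 (ltr0Sn _ 1)) (ltr_wpDl cz0 ltr01)).
  exists (maxn N1 N2) => n hn.
  have hn1 : (N1 <= n)%N by apply: leq_trans hn; apply: leq_maxl.
  have hn2 : (N2 <= n)%N by apply: leq_trans hn; apply: leq_maxr.
  have -> : T (xs n) - (m + z *: x) = (ms n - m) + z *: (xs n - x).
    by rewrite /ms /L scalerBr (zm4 _ (z *: xs n)).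
  apply: le_lt_trans (nm_triangle _ _) _; rewrite nmZ -/cz.
  have a1 := h1 n hn1; have a2 := h2 n hn2.
  have : cz * nm (xs n - x) <= (cz + 1) * (e / 2 / (cz + 1)).
    by apply: ler_pM; rewrite ?nm_ge0 // ?ltW //; lra.
  have -> : (cz + 1) * (e / 2 / (cz + 1)) = e / 2 by field; lra.
  lra.
have [dx Tx] := sa_closed hsa dxs cx cT.
have Lx : L x = m by rewrite /L Tx addrK.
have hd : nm (y - m) <= d.
  apply: le_of_eps => e e0.
  have [N1 h1] := cm (e / 2) (divr_gt0 e0 (ltr0Sn _ 1)).
  have [N2 h2] := eps_nat (divr_gt0 e0 (ltr0Sn _ 1)).
  have n1 := h1 _ (leq_maxl N1 N2); have n2 := h2 _ (leq_maxr N1 N2).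
  have n3 : nm (y - ms (maxn N1 N2)) < d + ep (maxn N1 N2) by case: (hxs (maxn N1 N2)).
  have := nm_triangleB y (ms (maxn N1 N2)) m; rewrite -/(ep _) in n2.
  lra.
pose v := y - m.
have hvar : forall x', D x' -> complex.Re (ip v (L x')) = 0.
  move=> x' dx'; apply: (@quad0 (q (L x'))); first exact: q_ge0.
  move=> s.
  have dxs' : D (x + s%:C *: x') by apply: (linDD hl) => //; apply: (linDZ hl).
  have h1 := dlb _ dxs'.
  rewrite LD ?LZ // in h1; last by apply: (linDZ hl).
  rewrite Lx opprD addrA -/v in h1.
  have h2 : q v <= q (v - s%:C *: L x').
    rewrite -!nm_sq; have := nm_ge0 v; have := le_trans hd h1; have := nm_ge0 (v - s%:C *: L x'); nra.
  move: h2; rewrite [q (v - _)]qB qZr Re_ipZr; lra.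
have horth : forall x', D x' -> ip (L x') v = 0.
  move=> x' dx'; apply: cplx_eq.
    by rewrite Re_ipC hvar // Re0.
  have dix : D ('i *: x') by apply: (linDZ hl).
  have := hvar _ dix; rewrite LZ // Re_ipC ipZl !cE => e; lra.
have dv : D v.
  apply: hadj; exists (conjc z *: v) => x' dx'.
  have : T x' = L x' + z *: x' by rewrite /L subrK.
  move=> ->; rewrite ipDl horth // add0r ipZl ipZr conjcK //.
have := horth _ dv; rewrite /L ipBl ipZl ipxx => /(congr1 (@complex.Im R)).
rewrite ImC ImN ImM ImRC ReRC (sa_real hsa dv) Im0 mulr0 add0r => /eqP.
rewrite add0r oppr_eq0 mulf_eq0 (negbTE hz) /= => /eqP /q0 v0.
exists x; split=> //; rewrite -/(L x) Lx; by move: v0; rewrite /v => /eqP; rewrite subr_eq0 => /eqP ->.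
Qed.


Lemma sa_resolvent : resolvent ip D T z.
Proof.
have [S hS] := fchoice surj.
have dS : forall y, D (S y) by move=> y; case: (hS y).
have LS : forall y, L (S y) = y by move=> y; case: (hS y).
have iz : 0 < `|complex.Im z| by rewrite normr_gt0.
exists S; split.
- split.
    split=> // a x y _ _; apply: L_inj.
    + exact: dS.
    + by apply: (linDD hl); [apply: (linDZ hl)|].
    + by rewrite LD ?LZ ?LS //; apply: (linDZ hl).
  exists (`|complex.Im z|^-1) => y.
  have := lowb (dS y); rewrite LS => h.
  by rewrite ler_pdivlMl // mulrC.
- move=> y; exact: hS.
- move=> x dx; apply: L_inj => //; exact: LS.
Qed.

End Resolv.

Lemma lm1 (V : lmodType R[i]) (a t : R[i]) (u v w r : V) :
  a *: u + v + t *: (a *: w + r) = a *: (u + t *: w) + (v + t *: r).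
Proof. by rewrite !scalerDr !scalerA [t * a]mulrC [LHS]addrACA. Qed.

Section Pert.
Variables (DA : H -> Prop) (A B : H -> H) (t : R).
Hypothesis hA : self_adjoint ip DA A.
Hypothesis hBs : self_adjoint ip (fun _ => True) B.

Lemma sa_pert : self_adjoint ip DA (fun v => A v + t%:C *: B v).
Proof.
case: hA => hlA hdA hsA hadA; case: hBs => hlB _ hsB _.
split=> //.
- case: (hlA) => d0 dD hTA; case: (hlB) => _ _ hTB; split=> // a x y dx dy.
  by rewrite hTA // hTB // lm1.
- move=> x y dx dy; rewrite ipDl ipDr ipZl ipZr conjc_real hsA // hsB //.
- move=> y [w hw]; apply: hadA; exists (w - t%:C *: B y) => x dx.
  have := hw x dx; rewrite ipDl ipZl hsB // ipBr ipZr conjc_real => <-.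
  by rewrite addrK.
Qed.
End Pert.

Section Bound.
Variables (D : H -> Prop) (T : H -> H).
Hypothesis hl : linear_on D T.
Hypothesis hsym : forall x y, D x -> D y -> ip (T x) y = ip x (T y).

Definition respkg (lam : R[i]) (S : H -> H) := [/\ linear_on (fun _ => True) S,
  (exists C : R, forall x, nm (S x) <= C * nm x),
  (forall y, D (S y) /\ T (S y) - lam *: S y = y) &
  (forall x, D x -> S (T x - lam *: x) = x)].

Lemma res_pkg lam : resolvent ip D T lam -> exists S, respkg lam S.
Proof. by move=> [S [[hlS hb] h1 h2]]; exists S; split. Qed.

Lemma res_sym (c : R) S : respkg c%:C S -> forall y y', ip (S y) y' = ip y (S y').
Proof.
case=> _ _ h1 _ y y'.
have [d1 e1] := h1 y; have [d2 e2] := h1 y'.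
rewrite -{1}e2 -{2}e1 ipBr ipBl ipZr ipZl conjc_real hsym //.
Qed.

Lemma res_key (mu : R) S (K : R) (w : H) (c : R) (S0 : H -> H) : mu != 0 ->
  respkg (c + mu)%:C S -> (forall x, nm (S x) <= K * nm x) ->
  (forall y, D (S0 y) /\ T (S0 y) - c%:C *: S0 y = y) ->
  nm (S0 w) <= K * `|mu| * nm (S0 w - mu^-1%:C *: w).
Proof.
move=> mu0; case=> _ _ _ hinv hK h0.
have [dw ew] := h0 w.
have e : T (S0 w) - (c + mu)%:C *: S0 w = - (mu%:C *: (S0 w - mu^-1%:C *: w)).
  rewrite rmorphD scalerDl opprD addrA ew scalerBr scalerA -rmorphM.
  by rewrite mulfV // scale1r opprB addrC.
have h := hinv _ dw; rewrite e in h; rewrite -{1}h.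
by apply: le_trans (hK _) _; rewrite nmN nmZr mulrA.
Qed.


Lemma res_bound (c e : R) S : 0 < e ->
  (forall lam : R, `|lam| < e -> resolvent ip D T (c + lam)%:C) ->
  respkg c%:C S -> forall y, nm (S y) <= 2 / e * nm y.
Proof.
move=> e0 hres hS.
have hsS := res_sym hS.
case: (hS) => hlS [C hC] h1 h2.
have SZ : forall a x, S (a *: x) = a *: S x by move=> a x; apply: (linTZ hlS).
have SD : forall x y, S (x + y) = S x + S y by move=> x y; apply: (linTD hlS).
have S0 : S 0 = 0 by apply: (linT0 hlS).
pose E := fun r => exists y, nm y <= 1 /\ r = nm (S y).
have hsup : has_sup E.
  split; first by exists (nm (S 0)); exists 0; rewrite nm0 ler01.
  exists `|C| => r [y [hy ->]]; apply: le_trans (hC y) _.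
  apply: le_trans (_ : `|C| * nm y <= _); first by rewrite ler_wpM2r ?nm_ge0 ?ler_norm.
  by rewrite -[X in _ <= X]mulr1 ler_wpM2l.
set s := sup E.
have sub : forall r, E r -> r <= s := sup_upper_bound hsup.
have s0 : 0 <= s by apply: sub; exists 0; rewrite nm0 ler01 S0 nm0.
have bs : forall y, nm (S y) <= s * nm y.
  move=> y; have [y0|ny] := eqVneq (nm y) 0.
    by rewrite (nm_eq0 y0) S0 nm0 mulr0.
  have yp : 0 < nm y by rewrite lt0r ny nm_ge0.
  pose y' := (nm y)^-1%:C *: y.
  have h : nm (S y') <= s by apply: sub; exists y'; split=> //; rewrite /y' nmZr ger0_norm ?invr_ge0 ?nm_ge0 // mulVf.
  move: h; rewrite /y' SZ nmZr ger0_norm ?invr_ge0 ?nm_ge0 // mulrC -ler_pdivlMr ?invr_gt0 //.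
  by rewrite invrK.
move=> y; apply: le_trans (bs y) _; rewrite ler_wpM2r ?nm_ge0 //.
rewrite leNgt; apply/negP => hs.
have sp : 0 < s by apply: lt_trans hs; rewrite divr_gt0.
have sinv : s^-1 < e / 2.
  by rewrite -ltf_pV2 ?posrE ?invr_gt0 ?divr_gt0 // invrK invf_div.
have mup : `|s^-1| < e by rewrite ger0_norm ?invr_ge0 //; lra.
have mum : `|- s^-1| < e by rewrite normrN.
have [Sp hSp] := res_pkg (hres _ mup).
have [Sm hSm] := res_pkg (hres _ mum).
have [Kp hKp] : exists K, forall x, nm (Sp x) <= K * nm x by case: hSp.
have [Km hKm] : exists K, forall x, nm (Sm x) <= K * nm x by case: hSm.
pose K := `|Kp| + `|Km|.
have K0 : 0 <= K by rewrite addr_ge0.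
have hKp' : forall x, nm (Sp x) <= K * nm x.
  move=> x; apply: le_trans (hKp x) _; rewrite ler_wpM2r ?nm_ge0 //.
  by apply: le_trans (ler_norm _) _; rewrite lerDl.
have hKm' : forall x, nm (Sm x) <= K * nm x.
  move=> x; apply: le_trans (hKm x) _; rewrite ler_wpM2r ?nm_ge0 //.
  by apply: le_trans (ler_norm _) _; rewrite lerDr.
have keyp : forall w, nm (S w) <= K / s * nm (S w - s%:C *: w).
  move=> w; have := @res_key (s^-1) Sp K w c S _ hSp hKp' h1.
  by rewrite invrK ger0_norm ?invr_ge0 //; apply; rewrite invr_neq0 // gt_eqF.
have keym : forall w, nm (S w) <= K / s * nm (S w + s%:C *: w).
  move=> w; have := @res_key (- s^-1) Sm K w c S _ hSm hKm' h1.
  rewrite invrN invrK normrN ger0_norm ?invr_ge0 // rmorphN scaleNr opprK.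
  by apply; rewrite oppr_eq0 invr_neq0 // gt_eqF.
pose th := s ^+ 2 / (2 * (K + 1)).
have th0 : 0 < th by rewrite divr_gt0 ?exprn_gt0 //; lra.
pose P := (1 + K / s) ^+ 2.
have Ks0 : 0 <= K / s by rewrite divr_ge0 // ltW.
have P0 : 0 < P by rewrite exprn_gt0 //; lra.
pose eta := Num.min (s / 2) (th ^+ 2 / (4 * s * P)).
have hsP : 0 < 4 * s * P by apply: mulr_gt0 => //; lra.
have eta0 : 0 < eta.
  rewrite lt_min; apply/andP; split; first by lra.
  by rewrite divr_gt0 ?exprn_gt0.
have eta1 : eta <= s / 2 by rewrite ge_min lexx.
have eta2 : eta * (4 * s * P) <= th ^+ 2.
  have : eta <= th ^+ 2 / (4 * s * P) by rewrite ge_min lexx orbT.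
  by rewrite ler_pdivlMr.
have [r [y0 [hy0 ->]] hr] := sup_adherent eta0 hsup.
rewrite -/s in hr.
pose u := S (S y0) - (s ^+ 2)%:C *: y0.
have qy0 : q y0 <= 1 by rewrite -nm_sq; have := nm_ge0 y0; nra.
have hq : q u <= s ^+ 2 * (s ^+ 2 - q (S y0)).
  rewrite /u qB qZr ipZr conjc_real.
  have -> : complex.Re ((s ^+ 2)%:C * ip (S (S y0)) y0) = s ^+ 2 * q (S y0).
    by rewrite hsS !cE; ring.
  have h3 : q (S (S y0)) <= s ^+ 2 * q (S y0).
    rewrite -!nm_sq; have := bs (S y0); have := nm_ge0 (S (S y0)); have := nm_ge0 (S y0); nra.
  have := q_ge0 y0; have := q_ge0 (S y0); nra.
have qSy : (s - eta) ^+ 2 < q (S y0).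
  rewrite -nm_sq; have : 0 < s - eta by lra.
  have := nm_ge0 (S y0); nra.
have hq2 : q u <= 2 * s ^+ 3 * eta.
  apply: le_trans hq _; have := eta0; nra.
pose w := S y0 + s%:C *: y0.
have ew : S w - s%:C *: w = u.
  rewrite /w /u SD SZ scalerDr scalerA -rmorphM -expr2.
  by rewrite opprD addrA addrK.
have [hw|hw] := lerP th (nm w).
- have := keyp w; rewrite ew => hk.
  have hsw : s * nm w <= nm (S w) + nm u.
    have := nm_triangle (S w) (- u); rewrite nmN -ew opprB addrC subrK nmZr ger0_norm //; lra.
  have hu0 := nm_ge0 u.
  have h4 : s * th <= (1 + K / s) * nm u.
    have : s * th <= s * nm w by rewrite ler_pM2l.
    have := divr_ge0 K0 (ltW sp); nra.
  have h5 : (s * th) ^+ 2 <= P * q u.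
    rewrite -nm_sq /P -exprMn; have : 0 <= s * th by rewrite mulr_ge0 // ltW.
    nra.
  have h6 : P * q u <= P * (2 * s ^+ 3 * eta) by rewrite ler_pM2l.
  have h7 : P * (2 * s ^+ 3 * eta) = s ^+ 2 / 2 * (eta * (4 * s * P)).
    by field.
  have : s ^+ 2 / 2 * (eta * (4 * s * P)) <= s ^+ 2 / 2 * th ^+ 2.
    by rewrite ler_pM2l // divr_gt0 ?exprn_gt0.
  have : 0 < s ^+ 2 * th ^+ 2 by rewrite mulr_gt0 ?exprn_gt0.
  rewrite exprMn in h5; lra.
- have := keym y0; rewrite -/w => hk.
  have h4 : K / s * nm w <= K / s * th by rewrite ler_wpM2l // ltW.
  have h5 : K / s * th <= s / 2.
    rewrite /th; have -> : K / s * (s ^+ 2 / (2 * (K + 1))) = s / 2 * (K / (K + 1)) by field; lra.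
    rewrite -[X in _ <= X]mulr1 ler_pM2l ?divr_gt0 // ler_pdivrMr; lra.
  lra.
Qed.

End Bound.

Lemma zm6 (V : zmodType) (p q r s : V) : p + q - r = p + s - r - (s - q).
Proof. by rewrite opprB [RHS]addrA [RHS]addrAC [p + s - r - s]addrAC addrK addrAC. Qed.

Section Pos.
Variables (DA : H -> Prop) (B : H -> H) (CB : R).
Hypothesis hdense : dense ip DA.
Hypothesis hBs : self_adjoint ip (fun _ => True) B.
Hypothesis hCB : forall x, nm (B x) <= CB * nm x.
Hypothesis hBpos : forall x, 0 <= ip (B x) x.

Lemma Bpos_re x : 0 <= complex.Re (ip (B x) x).
Proof. by have := hBpos x; rewrite lecE => /andP[_]; rewrite Re0. Qed.

Lemma exists_pos : (exists x, B x <> 0) -> exists u, DA u /\ 0 < complex.Re (ip (B u) u).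
Proof.
case: hBs => hlB _ hsB _ [x0 hx0].
have BD : forall x y, B (x + y) = B x + B y by move=> x y; apply: (linTD hlB).
have BB : forall x y, B (x - y) = B x - B y by move=> x y; apply: (linTB hlB).
have [v hv] : exists v, 0 < complex.Re (ip (B v) v).
  have [h|h] := boolP (0 < complex.Re (ip (B x0) x0)); first by exists x0.
  exists (x0 + B x0).
  have e0 : complex.Re (ip (B x0) x0) = 0.
    by apply/eqP; rewrite eq_le Bpos_re andbT leNgt.
  rewrite BD ipDl !ipDr !ReC e0 (hsB (B x0) x0) //.
  have : 0 < q (B x0).
    rewrite lt0r q_ge0 andbT; apply/eqP => /q0; exact: hx0.
  have := Bpos_re (B x0). lra.
pose bv := complex.Re (ip (B v) v).
pose M := `|CB| * (nm v + 1) + nm (B v) + 1.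
have M0 : 0 < M by rewrite /M; have := nm_ge0 v; have := nm_ge0 (B v); have := normr_ge0 CB; nra.
pose del := Num.min 1 (bv / (2 * M)).
have del0 : 0 < del by rewrite lt_min ltr01 divr_gt0 // mulr_gt0.
have [u [du hu]] := hdense v del0.
exists u; split=> //.
have hd1 : nm (v - u) <= 1 by apply: ltW; apply: lt_le_trans hu _; rewrite ge_min lexx.
have hd2 : nm (v - u) * (2 * M) <= bv.
  rewrite -ler_pdivlMr ?mulr_gt0 //; apply: ltW; apply: lt_le_trans hu _.
  by rewrite ge_min lexx orbT.
have hnu : nm u <= nm v + 1.
  have := nm_triangleB u v 0; rewrite !subr0 nmB_sym; lra.
have e1 : complex.Re (ip (B v) v) - complex.Re (ip (B u) u)
   = complex.Re (ip (B (v - u)) u) + complex.Re (ip (B v) (v - u)).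
  rewrite BB ipBl ipBr !ReC !ReN; ring.
have h1 : complex.Re (ip (B (v - u)) u) <= `|CB| * nm (v - u) * (nm v + 1).
  apply: le_trans (Re_le_nm _ _) _.
  apply: ler_pM; rewrite ?nm_ge0 //.
  apply: le_trans (hCB _) _; rewrite ler_wpM2r ?nm_ge0 ?ler_norm //.
have h2 : complex.Re (ip (B v) (v - u)) <= nm (B v) * nm (v - u) by apply: Re_le_nm.
rewrite -/bv in e1.
have := nm_ge0 (v - u); have := normr_ge0 CB; have := nm_ge0 (B v); rewrite /M in hd2.
nra.
Qed.
End Pos.

Section Dens.
Variables (DA : H -> Prop) (A B : H -> H) (CB c e : R) (Sf : R -> H -> H) (u : H).
Hypothesis hA : self_adjoint ip DA A.
Hypothesis hBs : self_adjoint ip (fun _ => True) B.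
Hypothesis hCB : forall x, nm (B x) <= CB * nm x.
Hypothesis hBpos : forall x, 0 <= ip (B x) x.
Hypothesis e0 : 0 < e.
Hypothesis hSf : forall t, respkg DA (fun v => A v + t%:C *: B v) c%:C (Sf t).
Hypothesis hK : forall t y, nm (Sf t y) <= 2 / e * nm y.
Hypothesis hu : DA u.
Hypothesis hb : 0 < complex.Re (ip (B u) u).

Local Notation K := (2 / e).
Let K0 : 0 <= K. Proof. by rewrite divr_ge0 // ltW. Qed.
Local Notation CB' := (`|CB|).
Let hCB' : forall x, nm (B x) <= CB' * nm x.
Proof. by move=> x; apply: le_trans (hCB x) _; rewrite ler_wpM2r ?nm_ge0 ?ler_norm. Qed.
Let BL : linear_on (fun _ => True) B. Proof. by case: hBs. Qed.
Let hsB : forall x y, ip (B x) y = ip x (B y). Proof. by case: hBs => _ _ h _ x y; apply: h. Qed.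

Let Ssym t : forall y y', ip (Sf t y) y' = ip y (Sf t y').
Proof.
have hp := sa_pert t hA hBs; case: hp => hl _ hs _.
exact: (@res_sym DA (fun v => A v + t%:C *: B v) hs c (Sf t) (hSf t)).
Qed.
Let SL t : linear_on (fun _ => True) (Sf t). Proof. by case: (hSf t). Qed.
Let SB t y y' : Sf t (y - y') = Sf t y - Sf t y'. Proof. exact: (linTB (SL t)). Qed.
Let SD t y y' : Sf t (y + y') = Sf t y + Sf t y'. Proof. exact: (linTD (SL t)). Qed.
Let SZ t a y : Sf t (a *: y) = a *: Sf t y. Proof. exact: (linTZ (SL t)). Qed.

Lemma res_ident a b y : Sf a y - Sf b y = (b - a)%:C *: Sf a (B (Sf b y)).
Proof.
case: (hSf a) => _ _ _ h2a; case: (hSf b) => _ _ h1b _.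
have [dvb evb] := h1b y.
set vb := Sf b y in dvb evb *.
have e1 : A vb + a%:C *: B vb - c%:C *: vb = y - (b - a)%:C *: B vb.
  by rewrite -evb rmorphB scalerBl (zm6 _ _ _ (b%:C *: B vb)).
have := h2a _ dvb; rewrite e1 SB SZ => e2.
by rewrite -{1}e2 subKr.
Qed.

Local Notation v t := (Sf t (B u)).
Local Notation g t := (complex.Re (ip (v t) (B u))).
Local Notation nb := (nm (B u)).
Local Notation beta := (complex.Re (ip (B u) u)).

Let nv t : nm (v t) <= K * nb. Proof. exact: hK. Qed.

Let nBv t : nm (B (v t)) <= CB' * (K * nb).
Proof. by apply: le_trans (hCB' _) _; rewrite ler_wpM2l ?normr_ge0. Qed.

Let Lip a b : nm (v a - v b) <= `|b - a| * (K * (CB' * (K * nb))).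
Proof.
rewrite res_ident nmZr ler_wpM2l ?normr_ge0 //.
apply: le_trans (hK _ _) _; rewrite ler_wpM2l //; exact: nBv.
Qed.

Local Notation Lc := (CB' * (K * nb) * (K * (CB' * (K * nb)))).
Let Lc0 : 0 <= Lc.
Proof. by rewrite !mulr_ge0 ?normr_ge0 ?nm_ge0 ?invr_ge0 ?ltW. Qed.

Lemma g_step a b : a <= b -> g b <= g a + Lc * (b - a) ^+ 2.
Proof.
move=> ab.
have e1 : g a - g b = (b - a) * complex.Re (ip (B (v b)) (v a)).
  by rewrite -ReN -ReC -ipBl res_ident Re_ipZl Ssym.
have e2 : complex.Re (ip (B (v b)) (v a)) =
   complex.Re (ip (B (v b)) (v b)) + complex.Re (ip (B (v b)) (v a - v b)).
  by rewrite ipBr ReC ReN; ring.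
have h1 := Bpos_re hBpos (v b).
have h2 : - (CB' * (K * nb) * (`|b - a| * (K * (CB' * (K * nb))))) <= complex.Re (ip (B (v b)) (v a - v b)).
  have hc := CS_re_nm (B (v b)) (v a - v b).
  have hp : nm (B (v b)) * nm (v a - v b) <= CB' * (K * nb) * (`|b - a| * (K * (CB' * (K * nb)))).
    by apply: ler_pM; [exact: nm_ge0|exact: nm_ge0|exact: nBv|exact: Lip].
  have hn : - complex.Re (ip (B (v b)) (v a - v b)) <= `|complex.Re (ip (B (v b)) (v a - v b))|.
    by rewrite -normrN ler_norm.
  lra.
have ba : `|b - a| = b - a by rewrite ger0_norm // subr_ge0.
rewrite ba in h2.
have hba : 0 <= b - a by rewrite subr_ge0.
have : (b - a) * (- (CB' * (K * nb) * ((b - a) * (K * (CB' * (K * nb)))))) <=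
       (b - a) * complex.Re (ip (B (v b)) (v a)).
  by rewrite ler_wpM2l //; rewrite e2; lra.
rewrite -e1.
move=> h; have -> : (b - a) ^+ 2 = (b - a) * (b - a) by rewrite expr2.
nra.
Qed.


Lemma g_iter n a h : 0 <= h -> g (a + n%:R * h) <= g a + Lc * n%:R * h ^+ 2.
Proof.
move=> h0; elim: n => [|n IH]; first by rewrite !mul0r addr0 mulr0 mul0r addr0.
have e1 : a + n.+1%:R * h = (a + n%:R * h) + h by rewrite -natr1 mulrDl mul1r addrA.
rewrite e1.
have hs : g (a + n%:R * h + h) <= g (a + n%:R * h) + Lc * h ^+ 2.
  have := @g_step (a + n%:R * h) (a + n%:R * h + h).
  have -> : a + n%:R * h + h - (a + n%:R * h) = h by rewrite addrC addKr.
  by apply; rewrite lerDl.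
have -> : Lc * n.+1%:R * h ^+ 2 = Lc * n%:R * h ^+ 2 + Lc * h ^+ 2 by rewrite -natr1; ring.
lra.
Qed.

Lemma g_mono a b : a <= b -> g b <= g a.
Proof.
move=> ab; apply: le_of_eps => eps eps0.
pose X := Lc * (b - a) ^+ 2.
have X0 : 0 <= X by rewrite mulr_ge0 ?Lc0 ?sqr_ge0.
have [N hN] := eps_nat (divr_gt0 eps0 (ltr_wpDl X0 ltr01)).
have hN' := hN N (leqnn N).
pose h := (b - a) / N.+1%:R.
have h0 : 0 <= h by rewrite divr_ge0 ?subr_ge0.
have := g_iter N.+1 a h0.
have Np : 0 < N.+1%:R :> R by rewrite ltr0Sn.
have -> : a + N.+1%:R * h = b by rewrite /h mulrC divfK ?subrKC // gt_eqF.
have -> : Lc * N.+1%:R * h ^+ 2 = X * N.+1%:R^-1 by rewrite /h /X; field; rewrite (gt_eqF e0) andbT; apply/negP => /eqP h1; have := ler0n R N; lra.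
have : X * N.+1%:R^-1 <= X * (eps / (X + 1)) by rewrite ler_wpM2l // ltW.
have : X * (eps / (X + 1)) <= eps.
  rewrite mulrA ler_pdivrMr; last by lra.
  nra.
move=> h1 h2 h3; apply: le_trans h3 _; rewrite lerD2l; exact: le_trans h2 h1.
Qed.

Local Notation Au := (A u - c%:C *: u).
Local Notation M := (nm Au * (nm u + K * nm Au)).

Lemma g_asym t : `|t| * `|t * g t - beta| <= M.
Proof.
case: (hSf t) => _ _ _ hinv.
have := hinv u hu.
rewrite (addrAC (A u)) SD SZ => e1.
have e2 : t%:C *: v t = u - Sf t Au by apply: (addIr (Sf t Au)); rewrite subrK addrC.
have e3 : t * g t - beta = - complex.Re (ip Au (v t)).
  rewrite -Re_ipZl e2 ipBl ReC ReN Ssym (Re_ipC u (B u)); ring.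
rewrite e3 normrN.
have h1 := CS_re_nm Au (v t).
have h2 : `|t| * nm (v t) <= nm u + K * nm Au.
  rewrite -nmZr e2; apply: le_trans (nm_triangle _ _) _; rewrite nmN lerD2l; exact: hK.
have := normr_ge0 t; have := nm_ge0 Au; have := nm_ge0 (v t).
have := normr_ge0 (complex.Re (ip Au (v t))).
nra.
Qed.

Lemma dens_false : False.
Proof.
have M0 : 0 <= M by rewrite mulr_ge0 ?nm_ge0 // addr_ge0 ?nm_ge0 // mulr_ge0 ?nm_ge0 // divr_ge0 // ltW.
have t00 : 0 < 2 * M / beta + 1.
  have : 0 <= 2 * M / beta by apply: divr_ge0; [apply: mulr_ge0 => //; lra | exact: ltW].
  lra.
have et0 : (2 * M / beta + 1) * beta = 2 * M + beta by field; rewrite (gt_eqF e0) (gt_eqF hb).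
move: (2 * M / beta + 1) t00 et0 => t0 t00 et0.
have hp := g_asym t0; rewrite (ger0_norm (ltW t00)) in hp.
have hm := g_asym (- t0); rewrite normrN (ger0_norm (ltW t00)) in hm.
have hmono : g t0 <= g (- t0) by apply: g_mono; lra.
move: hp hm hmono.
move: (g t0) (g (- t0)) => x1 x2 hp hm hmono.
have hX : - (t0 * x1 - beta) <= `|t0 * x1 - beta| by rewrite -normrN ler_norm.
have hY : - (- t0 * x2 - beta) <= `|- t0 * x2 - beta| by rewrite -normrN ler_norm.
move: hX hY hp hm.
move: (`|t0 * x1 - beta|) (`|- t0 * x2 - beta|) => y1 y2 hX hY hp hm.
have hbb := hb; move: hbb et0 hX hY hp hm; move: (beta) => bt hbb et0 hX hY hp hm.
have e' : t0 * (bt / 2) = 2 * M / 2 + bt / 2 by rewrite mulrA et0 mulrDl.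
have h1 : t0 * y1 < t0 * (bt / 2) by rewrite e'; lra.
have h2 : t0 * y2 < t0 * (bt / 2) by rewrite e'; lra.
rewrite ltr_pM2l // in h1; rewrite ltr_pM2l // in h2.
have g1 : 0 < t0 * x1 by lra.
have g2 : 0 < t0 * (- x2).
  rewrite mulrN; move: hY; rewrite mulNr => hY; lra.
rewrite pmulr_rgt0 // in g1; rewrite pmulr_rgt0 // in g2.
lra.
Qed.

End Dens.

End Base.

From Stdlib Require Import Classical.
Unset Implicit Arguments.

Theorem corollary2p6 (R : realType) (H : lmodType R[i]) (ip : H -> H -> R[i])
  (hH : is_hilbert ip)
  (DA : H -> Prop) (A : H -> H) (B : H -> H)
  (hA : self_adjoint ip DA A)
  (hBb : bounded_op ip B)
  (hBs : self_adjoint ip (fun _ => True) B)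
  (hBpos : forall x, 0 <= ip (B x) x)
  (hB0 : exists x, B x <> 0) :
  let Sigma := fun z : R[i] =>
    exists t : R, spectrum ip DA (fun v => A v + t%:C *: B v) z in
  (forall z, Sigma z -> complex.Im z = 0) /\
  (forall (x e : R), 0 < e -> exists mu : R, Sigma mu%:C /\ `|mu - x| < e).
Proof.
move=> Sigma; case: hH => ipl ipC ipge0 ipdef hcomp.
have hc : forall u, cauchy ip u -> exists l, conv ip u l by move=> u; apply: hcomp.
split.
  move=> z [t hsp]; case: (eqVneq (complex.Im z) 0) => // hz; exfalso; apply: hsp.
  exact: (sa_resolvent ipl ipC ipge0 ipdef (sa_pert ipl ipC t hA hBs) hc hz).
move=> x e e0; apply: NNPP => hno.
have hres : forall t (lam : R), `|lam| < e ->
    resolvent ip DA (fun v => A v + t%:C *: B v) (x + lam)%:C.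
  move=> t lam hl; apply: NNPP => hs; apply: hno; exists (x + lam); split.
    by exists t.
  by rewrite addrC addKr.
have hres0 : forall t, exists S, respkg ip DA (fun v => A v + t%:C *: B v) x%:C S.
  move=> t; apply: res_pkg; have := hres t 0; rewrite addr0; apply; by rewrite normr0.
have [Sf hSf] := fchoice hres0.
have hK : forall t y, hnorm ip (Sf t y) <= 2 / e * hnorm ip y.
  move=> t; have [_ _ hs _] := sa_pert ipl ipC t hA hBs.
  exact: (res_bound ipl ipC ipge0 ipdef hs e0 (hres t) (hSf t)).
case: hBb => _ [CB hCB].
have [_ hdA _ _] := hA.
have [u [hu hb]] := exists_pos ipl ipC ipge0 ipdef hdA hBs hCB hBpos hB0.
exact: (dens_false ipl ipC ipge0 ipdef hA hBs hCB hBpos e0 hSf hK hu hb).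
Qed.
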